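(* Fix $\lambda>0$ and let $\mathrm{SU}(2)\subset\mathrm{SO}(4)\times\{1\}$ act on $\Lambda^2_-S^4$ as the lift of its standard action (via $(x_1,\dots,x_4)\leftrightarrow(x_1+ix_2,x_3+ix_4)\in\mathbb C^2$, fixing $x_5$). Let $I\subset\mathbb R$ be an open interval and $c(t)=\big({}^t(x_1(t),0,0,0,x_5(t)),{}^t(a_1(t),a_2(t),a_3(t))\big)$ a smooth path with $x_1(t)>0$, $x_1^2+x_5^2=1$. Then $\varphi_\lambda$ vanishes on the tangent spaces of $\mathrm{SU}(2)\cdot c(I)$ if and only if, for $i=1,2,3$, $$4\dot a_i\,\frac{1-x_5}{1+x_5}-a_i\,\frac{d}{dt}\Big\{\log(\lambda+r^2)+8\log(1+x_5)\Big\}=0,$$ where $r^2=a_1^2+a_2^2+a_3^2$.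
   Context: Let $S^4=\{x={}^t(x_1,\dots,x_5)\in\mathbb R^5:|x|=1\}$ with the round metric and let $\pi:\Lambda^2_-S^4\to S^4$ be the rank-3 bundle of anti-self-dual 2-forms. On $S^4\setminus\{x_5=\pm1\}$ use the oriented orthonormal frame $e_1=\frac{1}{\sqrt{1-x_5^2}}{}^t(-x_2,x_1,-x_4,x_3,0)$, $e_2=\frac{1}{\sqrt{1-x_5^2}}{}^t(-x_3,x_4,x_1,-x_2,0)$, $e_3=\frac{1}{\sqrt{1-x_5^2}}{}^t(-x_4,-x_3,x_2,x_1,0)$, $e_4=\frac{1}{\sqrt{1-x_5^2}}{}^t(-x_1x_5,-x_2x_5,-x_3x_5,-x_4x_5,1-x_5^2)$ with dual coframe $e^1,\dots,e^4$, and set $\omega_1=e^{12}-e^{34}$, $\omega_2=e^{13}-e^{42}$, $\omega_3=e^{14}-e^{23}$ ($e^{ij}=e^i\wedge e^j$), a local frame of $\Lambda^2_-S^4$. The point $\sum_i a_i\omega_i|_x$ is written $(x,{}^t(a_1,a_2,a_3))$; $r^2=a_1^2+a_2^2+a_3^2$ is the squared fiber norm (globally defined). Write $\nabla\omega_i=\sum_j\gamma_{ij}\otimes\omega_j$ for the connection induced by the Levi-Civita connection and $b_i=da_i+\sum_j a_j\pi^*\gamma_{ji}$. For $\lambda>0$ the Bryant–Salamon 3-form is $\varphi_\lambda=2s_\lambda\sum_{i=1}^3 b_i\wedge\pi^*\omega_i+s_\lambda^{-3}b_1\wedge b_2\wedge b_3$ with $s_\lambda=(\lambda+r^2)^{1/4}$;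 it is a torsion-free $G_2$-structure. A 4-dimensional submanifold $L$ is coassociative iff $\varphi_\lambda|_{TL}=0$. $\mathrm{SO}(5)$ acts on $S^4$ linearly and on $\Lambda^2_-S^4$ by the induced action on 2-forms ($g\cdot\omega=(g^{-1})^*\omega$), preserving $\varphi_\lambda$. *)

(* Defs.v *)
From Stdlib Require Import Reals ClassicalEpsilon.
Open Scope R_scope.

(* Vectors of R^5 / R^3 / R^4 are functions nat -> R, read at indices 1..n
   (matching the paper's indexing); other indices are never used. *)
Definition vec := nat -> R.

(* The derivative of f at t (the unique l with derivable_pt_lim f t l,
   whenever f is differentiable at t). *)
Definition deriv (f : R -> R) (t : R) : R :=
  epsilon (inhabits 0) (fun l => derivable_pt_lim f t l).

(* open interval (lo, hi), None meaning -oo resp. +oo *)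
Definition oint (lo hi : option R) (t : R) : Prop :=
  match lo with Some l => l < t | None => True end /\
  match hi with Some h => t < h | None => True end.

Definition smooth_on (I : R -> Prop) (f : R -> R) : Prop :=
  exists D : nat -> R -> R, D O = f /\
    forall n t, I t -> derivable_pt_lim (D n) t (D (S n) t).

Definition dot5 (u v : vec) : R :=
  u 1%nat * v 1%nat + u 2%nat * v 2%nat + u 3%nat * v 3%nat
  + u 4%nat * v 4%nat + u 5%nat * v 5%nat.

(* The oriented orthonormal frame e_1..e_4 on S^4 \ {x5 = +-1}
   (the formula is used on the open set |x5| < 1 of R^5). *)
Definition frame (k : nat) (x : vec) : vec := fun m =>
  (match k, m with
   | 1%nat, 1%nat => - x 2%nat | 1%nat, 2%nat => x 1%nat | 1%nat, 3%nat => - x 4%nat | 1%nat, 4%nat => x 3%nat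
   | 2%nat, 1%nat => - x 3%nat | 2%nat, 2%nat => x 4%nat | 2%nat, 3%nat => x 1%nat | 2%nat, 4%nat => - x 2%nat
   | 3%nat, 1%nat => - x 4%nat | 3%nat, 2%nat => - x 3%nat | 3%nat, 3%nat => x 2%nat | 3%nat, 4%nat => x 1%nat
   | 4%nat, 1%nat => - (x 1%nat * x 5%nat) | 4%nat, 2%nat => - (x 2%nat * x 5%nat)
   | 4%nat, 3%nat => - (x 3%nat * x 5%nat) | 4%nat, 4%nat => - (x 4%nat * x 5%nat)
   | 4%nat, 5%nat => 1 - x 5%nat ^ 2
   | _, _ => 0
   end) / sqrt (1 - x 5%nat ^ 2).

(* dual coframe e^k at x, applied to a (tangent) vector u *)
Definition cof (k : nat) (x u : vec) : R := dot5 (frame k x) u.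

Definition e2 (k l : nat) (x u v : vec) : R :=
  cof k x u * cof l x v - cof l x u * cof k x v.

Definition om (i : nat) (x u v : vec) : R :=
  match i with
  | 1%nat => e2 1 2 x u v - e2 3 4 x u v
  | 2%nat => e2 1 3 x u v - e2 4 2 x u v
  | 3%nat => e2 1 4 x u v - e2 2 3 x u v
  | _ => 0
  end.

Definition sum_pairs (f : nat -> nat -> R) : R :=
  f 1%nat 2%nat + f 1%nat 3%nat + f 1%nat 4%nat
  + f 2%nat 3%nat + f 2%nat 4%nat + f 3%nat 4%nat.

(* gamma_{ji}(xi) at x, where nabla_xi omega_j = sum_i gamma_{ji}(xi) omega_i.
   The Levi-Civita connection of S^4 in R^5 is the tangential projection of
   the ambient derivative; hence (nabla_xi omega_j)(u,v) for tangent u,v is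
   the ambient directional derivative of y |-> omega_j|_y(u,v).  The
   coefficient on omega_i is extracted with the inner product
   <eta,eta'> = sum_{p<q} eta(e_p,e_q) eta'(e_p,e_q), for which the omega_i
   are orthogonal of squared norm 2. *)
Definition gam (j i : nat) (x xi : vec) : R :=
  / 2 * sum_pairs (fun p q =>
    deriv (fun s => om j (fun m => x m + s * xi m) (frame p x) (frame q x)) 0
    * om i x (frame p x) (frame q x)).

(* A point of Lambda^2_- over the chart: (x, (a_1,a_2,a_3)).
   A tangent vector of the total space: (xi, alpha) in R^5 x R^3. *)
Definition pt := (vec * vec)%type.

Definition r2 (a : vec) : R := a 1%nat ^ 2 + a 2%nat ^ 2 + a 3%nat ^ 2.

Definition bform (i : nat) (p : pt) (V : pt) : R :=
  snd V i + (snd p 1%nat * gam 1 i (fst p) (fst V)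
           + snd p 2%nat * gam 2 i (fst p) (fst V)
           + snd p 3%nat * gam 3 i (fst p) (fst V)).

Definition pom (i : nat) (p : pt) (V W : pt) : R := om i (fst p) (fst V) (fst W).

Definition b_wedge_om (i : nat) (p : pt) (V1 V2 V3 : pt) : R :=
  bform i p V1 * pom i p V2 V3 - bform i p V2 * pom i p V1 V3
  + bform i p V3 * pom i p V1 V2.

Definition b123 (p : pt) (V1 V2 V3 : pt) : R :=
  let b i V := bform i p V in
  b 1%nat V1 * (b 2%nat V2 * b 3%nat V3 - b 2%nat V3 * b 3%nat V2)
  - b 1%nat V2 * (b 2%nat V1 * b 3%nat V3 - b 2%nat V3 * b 3%nat V1)
  + b 1%nat V3 * (b 2%nat V1 * b 3%nat V2 - b 2%nat V2 * b 3%nat V1).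

Definition s_lam (lam : R) (p : pt) : R := Rpower (lam + r2 (snd p)) (/ 4).

Definition phi (lam : R) (p : pt) (V1 V2 V3 : pt) : R :=
  2 * s_lam lam p * (b_wedge_om 1 p V1 V2 V3 + b_wedge_om 2 p V1 V2 V3
                     + b_wedge_om 3 p V1 V2 V3)
  + / (s_lam lam p ^ 3) * b123 p V1 V2 V3.

(* SU(2), identified with the unit quaternions q = (q1,q2,q3,q4) via
   alpha = q1 + i q2, beta = q3 + i q4, g = [[alpha, -conj beta],[beta, conj alpha]],
   acting on C^2 = {(x1 + i x2, x3 + i x4)}, as a 5x5 real matrix fixing x5. *)
Definition on_S3 (q : vec) : Prop :=
  q 1%nat ^ 2 + q 2%nat ^ 2 + q 3%nat ^ 2 + q 4%nat ^ 2 = 1.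

Definition su2 (q : vec) (i j : nat) : R :=
  let p := q 1%nat in let a := q 2%nat in let r := q 3%nat in let s := q 4%nat in
  (match i, j with
   | 1%nat, 1%nat => p | 1%nat, 2%nat => - a | 1%nat, 3%nat => - r | 1%nat, 4%nat => - s
   | 2%nat, 1%nat => a | 2%nat, 2%nat => p | 2%nat, 3%nat => s | 2%nat, 4%nat => - r
   | 3%nat, 1%nat => r | 3%nat, 2%nat => - s | 3%nat, 3%nat => p | 3%nat, 4%nat => a
   | 4%nat, 1%nat => s | 4%nat, 2%nat => r | 4%nat, 3%nat => - a | 4%nat, 4%nat => p
   | 5%nat, 5%nat => 1
   | _, _ => 0
   end).

Definition matv (g : nat -> nat -> R) (u : vec) : vec := fun i =>
  g i 1%nat * u 1%nat + g i 2%nat * u 2%nat + g i 3%nat * u 3%nat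
  + g i 4%nat * u 4%nat + g i 5%nat * u 5%nat.

(* transpose = inverse for orthogonal g *)
Definition matTv (g : nat -> nat -> R) (u : vec) : vec := fun i =>
  g 1%nat i * u 1%nat + g 2%nat i * u 2%nat + g 3%nat i * u 3%nat
  + g 4%nat i * u 4%nat + g 5%nat i * u 5%nat.

(* action of g in SO(5) on Lambda^2_-: g . (x, a) = (g x, a') where
   sum_j a'_j omega_j|_{gx} = (g^{-1})^* (sum_i a_i omega_i|_x). *)
Definition act (g : nat -> nat -> R) (p : pt) : pt :=
  let x := fst p in let a := snd p in
  let y := matv g x in
  let eta u v := a 1%nat * om 1 x u v + a 2%nat * om 2 x u v + a 3%nat * om 3 x u v in
  (y, fun j => / 2 * sum_pairs (fun k l =>
        eta (matTv g (frame k y)) (matTv g (frame l y)) * om j y (frame k y) (frame l y))).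

Definition cpath (x1 x5 a1 a2 a3 : R -> R) (t : R) : pt :=
  (fun m => match m with 1%nat => x1 t | 5%nat => x5 t | _ => 0 end,
   fun m => match m with 1%nat => a1 t | 2%nat => a2 t | 3%nat => a3 t | _ => 0 end).

Definition Fmap (x1 x5 a1 a2 a3 : R -> R) (q : vec) (t : R) : pt :=
  act (su2 q) (cpath x1 x5 a1 a2 a3 t).

(* w is a tangent vector to SU(2).c(I) at F(q,t): the velocity at s = 0 of
   F(G(s),T(s)) for a curve (G,T) in SU(2) x I through (q,t),
   differentiable at 0. *)
Definition tangent_vec (I : R -> Prop) (F : vec -> R -> pt) (q : vec) (t : R)
  (w : pt) : Prop :=
  exists (G : R -> vec) (T : R -> R),
    (forall s, on_S3 (G s) /\ I (T s)) /\
    (forall k, (1 <= k <= 4)%nat -> G 0 k = q k) /\ T 0 = t /\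
    (forall k, (1 <= k <= 4)%nat -> exists l, derivable_pt_lim (fun s => G s k) 0 l) /\
    (exists l, derivable_pt_lim T 0 l) /\
    (forall m, (1 <= m <= 5)%nat ->
       derivable_pt_lim (fun s => fst (F (G s) (T s)) m) 0 (fst w m)) /\
    (forall m, (1 <= m <= 3)%nat ->
       derivable_pt_lim (fun s => snd (F (G s) (T s)) m) 0 (snd w m)).

(* Main.v *)
Require Import Defs.
From Stdlib Require Import Reals Lra Lia ClassicalEpsilon FunctionalExtensionality.
From Coquelicot Require Import Coquelicot.
Open Scope R_scope.

Lemma deriv_eq f t l : derivable_pt_lim f t l -> deriv f t = l.
Proof. intros H. unfold deriv. apply (uniqueness_limite f t).
  apply epsilon_spec. exists l; exact H. exact H. Qed.

Definition Nv (k : nat) (x : vec) : vec := fun m =>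
  match k, m with
   | 1%nat, 1%nat => - x 2%nat | 1%nat, 2%nat => x 1%nat | 1%nat, 3%nat => - x 4%nat | 1%nat, 4%nat => x 3%nat
   | 2%nat, 1%nat => - x 3%nat | 2%nat, 2%nat => x 4%nat | 2%nat, 3%nat => x 1%nat | 2%nat, 4%nat => - x 2%nat
   | 3%nat, 1%nat => - x 4%nat | 3%nat, 2%nat => - x 3%nat | 3%nat, 3%nat => x 2%nat | 3%nat, 4%nat => x 1%nat
   | 4%nat, 1%nat => - (x 1%nat * x 5%nat) | 4%nat, 2%nat => - (x 2%nat * x 5%nat)
   | 4%nat, 3%nat => - (x 3%nat * x 5%nat) | 4%nat, 4%nat => - (x 4%nat * x 5%nat)
   | 4%nat, 5%nat => 1 - x 5%nat ^ 2
   | _, _ => 0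
   end.

Lemma frame_Nv k x m : frame k x m = Nv k x m / sqrt (1 - x 5%nat ^ 2).
Proof. reflexivity. Qed.

Definition dNv (k : nat) (y xi : vec) : vec := fun m =>
  match k, m with
   | 4%nat, 1%nat => - (xi 1%nat * y 5%nat + y 1%nat * xi 5%nat)
   | 4%nat, 2%nat => - (xi 2%nat * y 5%nat + y 2%nat * xi 5%nat)
   | 4%nat, 3%nat => - (xi 3%nat * y 5%nat + y 3%nat * xi 5%nat)
   | 4%nat, 4%nat => - (xi 4%nat * y 5%nat + y 4%nat * xi 5%nat)
   | 4%nat, 5%nat => - (2 * y 5%nat * xi 5%nat)
   | 4%nat, _ => 0
   | _, _ => Nv k xi m
   end.

Definition line (y xi : vec) (s : R) : vec := fun m => y m + s * xi m.

Lemma Nv_deriv k y xi u :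
  derivable_pt_lim (fun s => dot5 (Nv k (line y xi s)) u) 0 (dot5 (dNv k y xi) u).
Proof.
  apply is_derive_Reals.
  destruct k as [|[|[|[|[|k]]]]]; unfold dot5, Nv, dNv, line; simpl;
   auto_derive; auto; ring.
Qed.

Lemma invsqrt_deriv y5 xi5 : 0 < 1 - y5 ^ 2 ->
  derivable_pt_lim (fun s => / sqrt (1 - (y5 + s * xi5) ^ 2)) 0
    (y5 * xi5 / (sqrt (1 - y5 ^ 2)) ^ 3).
Proof.
  intros H. apply is_derive_Reals. 
  assert (HS : sqrt (1 - y5^2) <> 0) by (apply Rgt_not_eq, sqrt_lt_R0; lra).
  auto_derive.
  all: replace (y5 + 0*xi5) with y5 by ring;
       replace (1 + - (y5 * (y5 * 1))) with (1 - y5^2) by ring.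
  - repeat split; auto.
  - field. exact HS.
Qed.

Lemma cof_split k z u : cof k z u = dot5 (Nv k z) u * / sqrt (1 - z 5%nat ^ 2).
Proof. unfold cof, dot5. rewrite !frame_Nv. unfold Rdiv. ring. Qed.

Definition dcof (k : nat) (y xi u : vec) : R :=
  dot5 (dNv k y xi) u * / sqrt (1 - y 5%nat ^ 2)
  + dot5 (Nv k y) u * (y 5%nat * xi 5%nat / (sqrt (1 - y 5%nat ^ 2)) ^ 3).

Lemma cof_deriv k y xi u : 0 < 1 - y 5%nat ^ 2 ->
  derivable_pt_lim (fun s => cof k (line y xi s) u) 0 (dcof k y xi u).
Proof.
  intros H.
  assert (E : (fun s => cof k (line y xi s) u) =
     (fun s => dot5 (Nv k (line y xi s)) u * / sqrt (1 - (y 5%nat + s * xi 5%nat) ^ 2))).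
  { apply functional_extensionality; intro s. rewrite cof_split. reflexivity. }
  rewrite E.
  pose proof (derivable_pt_lim_mult _ _ 0 _ _ (Nv_deriv k y xi u) (invsqrt_deriv (y 5%nat) (xi 5%nat) H)) as D.
  unfold mult_real_fct in D.
  replace (dcof k y xi u) with
    (dot5 (dNv k y xi) u * / sqrt (1 - (y 5%nat + 0 * xi 5%nat) ^ 2) +
       dot5 (Nv k (line y xi 0)) u * (y 5%nat * xi 5%nat / sqrt (1 - y 5%nat ^ 2) ^ 3)).
  exact D.
  unfold dcof. replace (y 5%nat + 0 * xi 5%nat) with (y 5%nat) by ring.
  assert (L0: line y xi 0 = y) by (apply functional_extensionality; intro m; unfold line; ring).
  rewrite L0. reflexivity.
Qed.

Definition yv (X1 X5 : R) (q : vec) : vec := fun m =>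
  match m with 1%nat => X1 * q 1%nat | 2%nat => X1 * q 2%nat | 3%nat => X1 * q 3%nat
  | 4%nat => X1 * q 4%nat | 5%nat => X5 | _ => 0 end.

Definition Fv (k : nat) (X1 X5 : R) (q : vec) : vec := fun m =>
  match k, m with
   | 4%nat, 1%nat => - (X5 * q 1%nat) | 4%nat, 2%nat => - (X5 * q 2%nat)
   | 4%nat, 3%nat => - (X5 * q 3%nat) | 4%nat, 4%nat => - (X5 * q 4%nat)
   | 4%nat, 5%nat => X1
   | 4%nat, _ => 0
   | _, _ => Nv k q m
   end.

Lemma sqrt_X1 X1 X5 : 0 < X1 -> X1 ^ 2 + X5 ^ 2 = 1 -> sqrt (1 - X5 ^ 2) = X1.
Proof. intros H1 H2. replace (1 - X5^2) with (X1^2) by lra. apply sqrt_pow2. lra. Qed.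

Lemma frame_yv k X1 X5 q : 0 < X1 -> X1 ^ 2 + X5 ^ 2 = 1 ->
  frame k (yv X1 X5 q) = Fv k X1 X5 q.
Proof.
  intros H1 H2. apply functional_extensionality; intro m.
  rewrite frame_Nv. change (yv X1 X5 q 5%nat) with X5. rewrite (sqrt_X1 X1 X5 H1 H2).
  replace (1 - X5^2) with (X1^2) by lra.
  destruct k as [|[|[|[|[|k]]]]]; destruct m as [|[|[|[|[|[|m]]]]]];
   unfold Nv, Fv, yv; simpl; try (field; lra);
  replace (1 - X5 * (X5 * 1)) with (X1^2) by nra; field; lra.
Qed.

Definition kd (k p : nat) : R := if Nat.eqb k p then 1 else 0.

Lemma cof_FF k p X1 X5 q : 0 < X1 -> X1 ^ 2 + X5 ^ 2 = 1 -> on_S3 q ->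
  (1 <= k <= 4)%nat -> (1 <= p <= 4)%nat ->
  cof k (yv X1 X5 q) (Fv p X1 X5 q) = kd k p.
Proof.
  intros H1 H2 Hq Hk Hp. unfold cof. rewrite frame_yv by assumption.
  unfold on_S3 in Hq.
  destruct k as [|[|[|[|[|k]]]]]; try lia; destruct p as [|[|[|[|[|p]]]]]; try lia;
  unfold dot5, Fv, Nv, kd; simpl;
  first [ring | (rewrite <- Hq; ring) | nra].
Qed.

Definition de2 (k l : nat) (y xi u v : vec) : R :=
  dcof k y xi u * cof l y v + cof k y u * dcof l y xi v
  - (dcof l y xi u * cof k y v + cof l y u * dcof k y xi v).

Definition dom (i : nat) (y xi u v : vec) : R :=
  match i with
  | 1%nat => de2 1 2 y xi u v - de2 3 4 y xi u v
  | 2%nat => de2 1 3 y xi u v - de2 4 2 y xi u v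
  | 3%nat => de2 1 4 y xi u v - de2 2 3 y xi u v
  | _ => 0
  end.

Lemma line0 y xi : line y xi 0 = y.
Proof. apply functional_extensionality; intro m; unfold line; ring. Qed.

Lemma e2_deriv k l y xi u v : 0 < 1 - y 5%nat ^ 2 ->
  derivable_pt_lim (fun s => e2 k l (line y xi s) u v) 0 (de2 k l y xi u v).
Proof.
  intros H.
  pose proof (derivable_pt_lim_minus _ _ 0 _ _
     (derivable_pt_lim_mult _ _ 0 _ _ (cof_deriv k y xi u H) (cof_deriv l y xi v H))
     (derivable_pt_lim_mult _ _ 0 _ _ (cof_deriv l y xi u H) (cof_deriv k y xi v H))) as D.
  unfold minus_fct, mult_real_fct in D. rewrite !line0 in D.
  unfold de2, e2. exact D.
Qed.

Lemma om_deriv i y xi u v : 0 < 1 - y 5%nat ^ 2 ->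
  derivable_pt_lim (fun s => om i (line y xi s) u v) 0 (dom i y xi u v).
Proof.
  intros H.
  destruct i as [|[|[|[|i]]]]; simpl; try (apply derivable_pt_lim_const).
  - pose proof (derivable_pt_lim_minus _ _ 0 _ _ (e2_deriv 1 2 y xi u v H) (e2_deriv 3 4 y xi u v H)) as D;
    unfold minus_fct in D; exact D.
  - pose proof (derivable_pt_lim_minus _ _ 0 _ _ (e2_deriv 1 3 y xi u v H) (e2_deriv 4 2 y xi u v H)) as D;
    unfold minus_fct in D; exact D.
  - pose proof (derivable_pt_lim_minus _ _ 0 _ _ (e2_deriv 1 4 y xi u v H) (e2_deriv 2 3 y xi u v H)) as D;
    unfold minus_fct in D; exact D.
Qed.

Lemma om_dv i y xi u v : 0 < 1 - y 5%nat ^ 2 ->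
  deriv (fun s => om i (fun m => y m + s * xi m) u v) 0 = dom i y xi u v.
Proof. intros H. apply deriv_eq. apply (om_deriv i y xi u v H). Qed.

Lemma gam_eq j i y xi : 0 < 1 - y 5%nat ^ 2 ->
  gam j i y xi = / 2 * sum_pairs (fun p q =>
    dom j y xi (frame p y) (frame q y) * om i y (frame p y) (frame q y)).
Proof. intros H. unfold gam, sum_pairs. rewrite !om_dv by exact H. reflexivity. Qed.

Definition cc (k : nat) (q g : vec) : R :=
  Nv k q 1%nat * g 1%nat + Nv k q 2%nat * g 2%nat + Nv k q 3%nat * g 3%nat + Nv k q 4%nat * g 4%nat.

Definition qg (q g : vec) : R :=
  q 1%nat * g 1%nat + q 2%nat * g 2%nat + q 3%nat * g 3%nat + q 4%nat * g 4%nat.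

Definition xiv (X1 X5 X5d tau : R) (q g : vec) : vec := fun m =>
  match m with
  | 1%nat => - (X5 * X5d / X1) * tau * q 1%nat + X1 * g 1%nat
  | 2%nat => - (X5 * X5d / X1) * tau * q 2%nat + X1 * g 2%nat
  | 3%nat => - (X5 * X5d / X1) * tau * q 3%nat + X1 * g 3%nat
  | 4%nat => - (X5 * X5d / X1) * tau * q 4%nat + X1 * g 4%nat
  | 5%nat => X5d * tau
  | _ => 0 end.

Definition Dval (k p : nat) (c1 c2 c3 X5 : R) : R :=
  match k, p with
  | 1%nat, 2%nat => - c3 | 1%nat, 3%nat => c2 | 1%nat, 4%nat => X5 * c1
  | 2%nat, 1%nat => c3 | 2%nat, 3%nat => - c1 | 2%nat, 4%nat => X5 * c2
  | 3%nat, 1%nat => - c2 | 3%nat, 2%nat => c1 | 3%nat, 4%nat => X5 * c3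
  | 4%nat, 1%nat => - (X5 * c1) | 4%nat, 2%nat => - (X5 * c2) | 4%nat, 3%nat => - (X5 * c3)
  | _, _ => 0 end.

Lemma dcof_FF k p X1 X5 X5d tau q g : 0 < X1 -> X1 ^ 2 + X5 ^ 2 = 1 -> on_S3 q -> qg q g = 0 ->
  (1 <= k <= 4)%nat -> (1 <= p <= 4)%nat ->
  dcof k (yv X1 X5 q) (xiv X1 X5 X5d tau q g) (Fv p X1 X5 q)
  = Dval k p (cc 1 q g) (cc 2 q g) (cc 3 q g) X5.
Proof.
  intros H1 H2 Hq Hqg Hk Hp. unfold dcof.
  change (yv X1 X5 q 5%nat) with X5. rewrite (sqrt_X1 X1 X5 H1 H2).
  unfold on_S3 in Hq. unfold qg in Hqg.
  destruct k as [|[|[|[|[|k]]]]]; try lia; destruct p as [|[|[|[|[|p]]]]]; try lia;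
  unfold dot5, Fv, Nv, dNv, Dval, cc, xiv, yv; simpl;
  try (field; lra).
  all: try (transitivity (q 1%nat * g 1%nat + q 2%nat * g 2%nat + q 3%nat * g 3%nat + q 4%nat * g 4%nat);
       [field; lra | exact Hqg]).
  transitivity (X5^2 * (q 1%nat * g 1%nat + q 2%nat * g 2%nat + q 3%nat * g 3%nat + q 4%nat * g 4%nat)
     + X5 * X5d * tau * (q 1%nat ^ 2 + q 2%nat ^ 2 + q 3%nat ^ 2 + q 4%nat ^ 2 - 1)
     + X5 * X5d * tau * (1 - X5^2 - X1^2) / X1^2).
  field; lra.
  rewrite Hqg, Hq. replace (1 - X5^2 - X1^2) with 0 by lra. field. lra.
Qed.

Lemma cof_xi k X1 X5 X5d tau q g : 0 < X1 -> X1 ^ 2 + X5 ^ 2 = 1 -> on_S3 q -> qg q g = 0 ->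
  cof k (yv X1 X5 q) (xiv X1 X5 X5d tau q g) =
  match k with 1%nat => X1 * cc 1 q g | 2%nat => X1 * cc 2 q g | 3%nat => X1 * cc 3 q g
   | 4%nat => tau * X5d / X1 | _ => 0 end.
Proof.
  intros H1 H2 Hq Hqg. unfold cof. rewrite frame_yv by assumption.
  unfold on_S3 in Hq. unfold qg in Hqg.
  destruct k as [|[|[|[|[|k]]]]];
  unfold dot5, Fv, Nv, cc, xiv; simpl; try (field; lra).
  transitivity (- X5 * X1 * (q 1%nat * g 1%nat + q 2%nat * g 2%nat + q 3%nat * g 3%nat + q 4%nat * g 4%nat)
     + X5^2 * X5d * tau * (q 1%nat ^ 2 + q 2%nat ^ 2 + q 3%nat ^ 2 + q 4%nat ^ 2 - 1) / X1
     + X5d * tau * (X5^2 + X1^2 - 1) / X1 + tau * X5d / X1).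
  field; lra.
  rewrite Hqg, Hq. replace (X5^2 + X1^2 - 1) with 0 by lra. field. lra.
Qed.

Definition Gval (j i : nat) (c1 c2 c3 X5 : R) : R :=
  match j, i with
  | 1%nat, 2%nat => - ((1 + X5) * c1) | 2%nat, 1%nat => (1 + X5) * c1
  | 1%nat, 3%nat => (1 + X5) * c2 | 3%nat, 1%nat => - ((1 + X5) * c2)
  | 2%nat, 3%nat => (1 + X5) * c3 | 3%nat, 2%nat => - ((1 + X5) * c3)
  | _, _ => 0 end.

Lemma gam_val j i X1 X5 X5d tau q g : 0 < X1 -> X1 ^ 2 + X5 ^ 2 = 1 -> on_S3 q -> qg q g = 0 ->
  (1 <= j <= 3)%nat -> (1 <= i <= 3)%nat ->
  gam j i (yv X1 X5 q) (xiv X1 X5 X5d tau q g) = Gval j i (cc 1 q g) (cc 2 q g) (cc 3 q g) X5.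
Proof.
  intros H1 H2 Hq Hqg Hj Hi.
  rewrite gam_eq by (change (yv X1 X5 q 5%nat) with X5; nra).
  unfold sum_pairs. rewrite !frame_yv by assumption.
  destruct j as [|[|[|[|j]]]]; try lia; destruct i as [|[|[|[|i]]]]; try lia;
  unfold sum_pairs, dom, de2, om, e2;
  rewrite !(cof_FF _ _ X1 X5 q H1 H2 Hq) by lia;
  rewrite !(dcof_FF _ _ X1 X5 X5d tau q g H1 H2 Hq Hqg) by lia;
  unfold kd, Dval, Gval; simpl; field.
Qed.

Definition agree (u v : vec) : Prop := forall m, (1 <= m <= 5)%nat -> u m = v m.

Ltac agree_rw H :=
  let e1 := fresh in let e2 := fresh in let e3 := fresh in let e4 := fresh in let e5 := fresh in
  assert (e1 := H 1%nat ltac:(lia)); assert (e2 := H 2%nat ltac:(lia));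
  assert (e3 := H 3%nat ltac:(lia)); assert (e4 := H 4%nat ltac:(lia));
  assert (e5 := H 5%nat ltac:(lia));
  try rewrite e1; try rewrite e2; try rewrite e3; try rewrite e4; try rewrite e5.

Lemma cof_agree k y u u' : agree u u' -> cof k y u = cof k y u'.
Proof. intros H. unfold cof, dot5. agree_rw H. reflexivity. Qed.

Lemma om_agree i y u u' v v' : agree u u' -> agree v v' -> om i y u v = om i y u' v'.
Proof.
  intros H H'. destruct i as [|[|[|[|i]]]]; simpl; try reflexivity;
  unfold e2; rewrite !(cof_agree _ y u u' H), !(cof_agree _ y v v' H'); reflexivity.
Qed.

Lemma dcof_agree k y xi xi' u : agree xi xi' -> dcof k y xi u = dcof k y xi' u.
Proof.
  intros H. unfold dcof. rewrite (H 5%nat ltac:(lia)).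
  replace (dot5 (dNv k y xi) u) with (dot5 (dNv k y xi') u); [reflexivity|].
  destruct k as [|[|[|[|[|k]]]]]; unfold dot5, dNv, Nv; simpl; agree_rw H; reflexivity.
Qed.

Lemma gam_agree j i y xi xi' : 0 < 1 - y 5%nat ^ 2 -> agree xi xi' ->
  gam j i y xi = gam j i y xi'.
Proof.
  intros Hy H. rewrite !gam_eq by exact Hy. unfold sum_pairs, dom, de2.
  destruct j as [|[|[|[|j]]]]; try reflexivity;
  rewrite !(dcof_agree _ y xi xi' _ H); reflexivity.
Qed.

Definition bval (i : nat) (X5 a1 a2 a3 d1 d2 d3 c1 c2 c3 tau : R) : R :=
  match i with
  | 1%nat => d1 * tau + (1 + X5) * (a2 * c1 - a3 * c2)
  | 2%nat => d2 * tau - (1 + X5) * (a1 * c1 + a3 * c3)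
  | 3%nat => d3 * tau + (1 + X5) * (a1 * c2 + a2 * c3)
  | _ => 0 end.

Definition ww (u1 u2 v1 v2 : R) := u1 * v2 - u2 * v1.

Definition omval (i : nat) (u1 u2 u3 u4 v1 v2 v3 v4 : R) : R :=
  match i with
  | 1%nat => ww u1 u2 v1 v2 - ww u3 u4 v3 v4
  | 2%nat => ww u1 u3 v1 v3 - ww u4 u2 v4 v2
  | 3%nat => ww u1 u4 v1 v4 - ww u2 u3 v2 v3
  | _ => 0 end.

Definition TVh (X1 X5 X5d d1 d2 d3 : R) (q : vec) (V : pt) (g : vec) (tau : R) : Prop :=
  qg q g = 0 /\ agree (fst V) (xiv X1 X5 X5d tau q g) /\
  snd V 1%nat = d1 * tau /\ snd V 2%nat = d2 * tau /\ snd V 3%nat = d3 * tau.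

Lemma bform_val i X1 X5 X5d d1 d2 d3 q V g tau (Aa : vec) :
  0 < X1 -> X1 ^ 2 + X5 ^ 2 = 1 -> on_S3 q -> TVh X1 X5 X5d d1 d2 d3 q V g tau ->
  (1 <= i <= 3)%nat ->
  bform i (yv X1 X5 q, Aa) V = bval i X5 (Aa 1%nat) (Aa 2%nat) (Aa 3%nat) d1 d2 d3
      (cc 1 q g) (cc 2 q g) (cc 3 q g) tau.
Proof.
  intros H1 H2 Hq [Hqg [Hag [Hs1 [Hs2 Hs3]]]] Hi.
  unfold bform. simpl fst; simpl snd.
  assert (Hy : 0 < 1 - yv X1 X5 q 5%nat ^ 2) by (change (yv X1 X5 q 5%nat) with X5; nra).
  rewrite !(gam_agree _ _ _ _ _ Hy Hag).
  rewrite !(gam_val _ _ X1 X5 X5d tau q g H1 H2 Hq Hqg) by lia.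
  destruct i as [|[|[|[|i]]]]; try lia; unfold Gval, bval; simpl;
  rewrite ?Hs1, ?Hs2, ?Hs3; ring.
Qed.

Lemma pom_val i X1 X5 X5d d1 d2 d3 q V g tau W h sig (Aa : vec) :
  0 < X1 -> X1 ^ 2 + X5 ^ 2 = 1 -> on_S3 q -> TVh X1 X5 X5d d1 d2 d3 q V g tau ->
  TVh X1 X5 X5d d1 d2 d3 q W h sig ->
  pom i (yv X1 X5 q, Aa) V W = omval i (X1 * cc 1 q g) (X1 * cc 2 q g) (X1 * cc 3 q g) (tau * (X5d / X1))
     (X1 * cc 1 q h) (X1 * cc 2 q h) (X1 * cc 3 q h) (sig * (X5d / X1)).
Proof.
  intros H1 H2 Hq [Hqg [Hag _]] [Hqh [Hah _]].
  unfold pom. simpl fst.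
  rewrite (om_agree i _ _ _ _ _ Hag Hah).
  destruct i as [|[|[|[|i]]]]; simpl; try reflexivity; unfold e2, ww;
  rewrite !(cof_xi _ X1 X5 X5d _ q _ H1 H2 Hq Hqg), !(cof_xi _ X1 X5 X5d _ q _ H1 H2 Hq Hqh); unfold Rdiv; ring.
Qed.

Definition det3 (x1 y1 z1 x2 y2 z2 x3 y3 z3 : R) : R :=
  x1 * (y2 * z3 - y3 * z2) - x2 * (y1 * z3 - y3 * z1) + x3 * (y1 * z2 - y2 * z1).

Definition Kc (lam a1 a2 a3 d1 d2 d3 X1 X5 X5d ai di : R) : R :=
  2 * (lam + (a1 ^ 2 + a2 ^ 2 + a3 ^ 2)) * (di * X1 ^ 2 - 2 * ai * X5d * X1 * (1 + X5))
  - ai * (1 + X5) ^ 2 * (a1 * d1 + a2 * d2 + a3 * d3).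



Lemma core_id lam X1 X5 th a1 a2 a3 d1 d2 d3
  c11 c21 c31 t1 c12 c22 c32 t2 c13 c23 c33 t3 :
  let b i c1 c2 c3 t := bval i X5 a1 a2 a3 d1 d2 d3 c1 c2 c3 t in
  let o i c1 c2 c3 t c1' c2' c3' t' :=
    omval i (X1 * c1) (X1 * c2) (X1 * c3) (t * th) (X1 * c1') (X1 * c2') (X1 * c3') (t' * th) in
  let bw i := b i c11 c21 c31 t1 * o i c12 c22 c32 t2 c13 c23 c33 t3
            - b i c12 c22 c32 t2 * o i c11 c21 c31 t1 c13 c23 c33 t3
            + b i c13 c23 c33 t3 * o i c11 c21 c31 t1 c12 c22 c32 t2 in
  let B i m := match m with 1%nat => b i c11 c21 c31 t1 | 2%nat => b i c12 c22 c32 t2 | _ => b i c13 c23 c33 t3 end in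
  let Y := B 1%nat 1%nat * (B 2%nat 2%nat * B 3%nat 3%nat - B 2%nat 3%nat * B 3%nat 2%nat)
         - B 1%nat 2%nat * (B 2%nat 1%nat * B 3%nat 3%nat - B 2%nat 3%nat * B 3%nat 1%nat)
         + B 1%nat 3%nat * (B 2%nat 1%nat * B 3%nat 2%nat - B 2%nat 2%nat * B 3%nat 1%nat) in
  2 * (lam + (a1 ^ 2 + a2 ^ 2 + a3 ^ 2)) * (bw 1%nat + bw 2%nat + bw 3%nat) + Y =
  Kc lam a1 a2 a3 d1 d2 d3 X1 X5 th a1 d1 * det3 c11 c21 t1 c12 c22 t2 c13 c23 t3
  + Kc lam a1 a2 a3 d1 d2 d3 X1 X5 th a2 d2 * det3 c11 c31 t1 c12 c32 t2 c13 c33 t3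
  - Kc lam a1 a2 a3 d1 d2 d3 X1 X5 th a3 d3 * det3 c21 c31 t1 c22 c32 t2 c23 c33 t3.
Proof.
  intros. unfold Y, bw, B, b, o, bval, omval, ww, Kc, det3. simpl. ring.
Qed.

Lemma s4 lam Aa : 0 < lam -> forall X, X = s_lam lam ((fun m => 0), Aa) ->
  0 < X /\ X ^ 4 = lam + r2 Aa.
Proof.
  intros Hl X ->. unfold s_lam. simpl snd.
  assert (Hp : 0 < lam + r2 Aa) by (unfold r2; nra).
  split. unfold Rpower. apply exp_pos.
  rewrite <- (Rpower_pow 4 _) by (unfold Rpower; apply exp_pos).
  rewrite Rpower_mult. replace (/ 4 * INR 4) with 1 by (simpl; field).
  apply Rpower_1. exact Hp.
Qed.

Lemma phi_val lam X1 X5 X5d d1 d2 d3 q (Aa : vec) V1 g1 t1 V2 g2 t2 V3 g3 t3 :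
  0 < lam -> 0 < X1 -> X1 ^ 2 + X5 ^ 2 = 1 -> on_S3 q ->
  TVh X1 X5 X5d d1 d2 d3 q V1 g1 t1 ->
  TVh X1 X5 X5d d1 d2 d3 q V2 g2 t2 ->
  TVh X1 X5 X5d d1 d2 d3 q V3 g3 t3 ->
  phi lam (yv X1 X5 q, Aa) V1 V2 V3 =
  / (s_lam lam (yv X1 X5 q, Aa)) ^ 3 *
  (Kc lam (Aa 1%nat) (Aa 2%nat) (Aa 3%nat) d1 d2 d3 X1 X5 (X5d / X1) (Aa 1%nat) d1
     * det3 (cc 1 q g1) (cc 2 q g1) t1 (cc 1 q g2) (cc 2 q g2) t2 (cc 1 q g3) (cc 2 q g3) t3
   + Kc lam (Aa 1%nat) (Aa 2%nat) (Aa 3%nat) d1 d2 d3 X1 X5 (X5d / X1) (Aa 2%nat) d2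
     * det3 (cc 1 q g1) (cc 3 q g1) t1 (cc 1 q g2) (cc 3 q g2) t2 (cc 1 q g3) (cc 3 q g3) t3
   - Kc lam (Aa 1%nat) (Aa 2%nat) (Aa 3%nat) d1 d2 d3 X1 X5 (X5d / X1) (Aa 3%nat) d3
     * det3 (cc 2 q g1) (cc 3 q g1) t1 (cc 2 q g2) (cc 3 q g2) t2 (cc 2 q g3) (cc 3 q g3) t3).
Proof.
  intros Hl H1 H2 Hq T1 T2 T3.
  unfold phi, b_wedge_om, b123. cbv beta zeta.
  rewrite !(bform_val _ _ _ _ _ _ _ _ _ _ _ _ H1 H2 Hq T1) by lia.
  rewrite !(bform_val _ _ _ _ _ _ _ _ _ _ _ _ H1 H2 Hq T2) by lia.
  rewrite !(bform_val _ _ _ _ _ _ _ _ _ _ _ _ H1 H2 Hq T3) by lia.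
  rewrite !(pom_val _ _ _ _ _ _ _ _ _ _ _ _ _ _ _ H1 H2 Hq T1 T2).
  rewrite !(pom_val _ _ _ _ _ _ _ _ _ _ _ _ _ _ _ H1 H2 Hq T1 T3).
  rewrite !(pom_val _ _ _ _ _ _ _ _ _ _ _ _ _ _ _ H1 H2 Hq T2 T3).
  assert (E : s_lam lam (yv X1 X5 q, Aa) = s_lam lam ((fun _ => 0), Aa)) by reflexivity.
  destruct (s4 lam Aa Hl _ E) as [Hs Hs4].
  set (s := s_lam lam (yv X1 X5 q, Aa)) in *.
  match goal with |- 2 * s * ?X + / s ^ 3 * ?Y = _ =>
    transitivity (/ s ^ 3 * (2 * s ^ 4 * X + Y)); [field; lra|] end.
  rewrite Hs4. f_equal.
  exact (core_id lam X1 X5 (X5d / X1) (Aa 1%nat) (Aa 2%nat) (Aa 3%nat) d1 d2 d3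
    (cc 1 q g1) (cc 2 q g1) (cc 3 q g1) t1 (cc 1 q g2) (cc 2 q g2) (cc 3 q g2) t2
    (cc 1 q g3) (cc 2 q g3) (cc 3 q g3) t3).
Qed.

Definition ev : vec := fun m => match m with 1%nat => 1 | _ => 0 end.

Lemma ev_S3 : on_S3 ev.
Proof. unfold on_S3, ev. simpl. ring. Qed.

Lemma Fmap_fst x1 x5 a1 a2 a3 q t :
  fst (Fmap x1 x5 a1 a2 a3 q t) = yv (x1 t) (x5 t) q.
Proof.
  unfold Fmap, act. simpl fst. apply functional_extensionality; intro m.
  unfold matv, su2, cpath, yv. simpl.
  destruct m as [|[|[|[|[|[|m]]]]]]; simpl; ring.
Qed.

Lemma cpath_yv x1 x5 a1 a2 a3 t :
  fst (cpath x1 x5 a1 a2 a3 t) = yv (x1 t) (x5 t) ev.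
Proof.
  apply functional_extensionality; intro m. unfold cpath, yv, ev. simpl.
  destruct m as [|[|[|[|[|[|m]]]]]]; simpl; ring.
Qed.

Lemma matTv_Fv k X1 X5 q : on_S3 q ->
  matTv (su2 q) (Fv k X1 X5 q) = Fv k X1 X5 ev.
Proof.
  intros Hq. unfold on_S3 in Hq. apply functional_extensionality; intro m.
  unfold matTv, su2, Fv, Nv, ev.
  destruct k as [|[|[|[|[|k]]]]]; destruct m as [|[|[|[|[|[|m]]]]]]; simpl;
  first [ring | (rewrite <- Hq; ring) | nra].
Qed.

Lemma Fmap_snd x1 x5 a1 a2 a3 q t : on_S3 q -> 0 < x1 t -> x1 t ^ 2 + x5 t ^ 2 = 1 ->
  forall j, (1 <= j <= 3)%nat ->
  snd (Fmap x1 x5 a1 a2 a3 q t) j = snd (cpath x1 x5 a1 a2 a3 t) j.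
Proof.
  intros Hq H1 H2 j Hj.
  unfold Fmap, act. cbv beta zeta. cbn [snd].
  replace (matv (su2 q) (fst (cpath x1 x5 a1 a2 a3 t))) with (yv (x1 t) (x5 t) q)
    by (rewrite <- (Fmap_fst x1 x5 a1 a2 a3 q t); reflexivity).
  rewrite cpath_yv.
  unfold sum_pairs. rewrite !frame_yv by assumption.
  rewrite !matTv_Fv by assumption.
  destruct j as [|[|[|[|j]]]]; try lia; unfold om, e2;
  rewrite !(cof_FF _ _ (x1 t) (x5 t) q H1 H2 Hq) by lia;
  rewrite !(cof_FF _ _ (x1 t) (x5 t) ev H1 H2 ev_S3) by lia;
  unfold kd, cpath; simpl; field.
Qed.

Lemma oint_nbhd lo hi t : oint lo hi t ->
  exists d, 0 < d /\ forall u, Rabs (u - t) < d -> oint lo hi u.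
Proof.
  destruct lo as [l|], hi as [h|]; unfold oint; intros [Hl Hh].
  - exists (Rmin (t - l) (h - t)). split. apply Rmin_glb_lt; lra.
    intros u Hu. pose proof (Rmin_l (t - l) (h - t)). pose proof (Rmin_r (t - l) (h - t)).
    apply Rabs_def2 in Hu. split; lra.
  - exists (t - l). split. lra. intros u Hu. apply Rabs_def2 in Hu. split; [lra|exact I].
  - exists (h - t). split. lra. intros u Hu. apply Rabs_def2 in Hu. split; [exact I|lra].
  - exists 1. split. lra. intros. split; exact I.
Qed.

Lemma circ_deriv lo hi x1 x5 dx1 dx5 t :
  (forall t, oint lo hi t -> derivable_pt_lim x1 t (dx1 t)) ->
  (forall t, oint lo hi t -> derivable_pt_lim x5 t (dx5 t)) ->
  (forall t, oint lo hi t -> x1 t ^ 2 + x5 t ^ 2 = 1) ->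
  oint lo hi t -> x1 t * dx1 t + x5 t * dx5 t = 0.
Proof.
  intros D1 D5 Hc Ht.
  pose proof (derivable_pt_lim_plus _ _ t _ _
    (derivable_pt_lim_mult _ _ t _ _ (D1 t Ht) (D1 t Ht))
    (derivable_pt_lim_mult _ _ t _ _ (D5 t Ht) (D5 t Ht))) as D.
  unfold plus_fct, mult_fct in D.
  apply is_derive_Reals in D.
  assert (L : locally t (fun u => x1 u * x1 u + x5 u * x5 u = 1)).
  { destruct (oint_nbhd lo hi t Ht) as [d [Hd Hu]].
    exists (mkposreal d Hd). intros u Hb.
    assert (Hr : Rabs (u - t) < d) by exact Hb.
    pose proof (Hc u (Hu u Hr)) as H. rewrite <- H. ring. }
  pose proof (is_derive_ext_loc _ _ _ _ L D) as D'.
  pose proof (derivable_pt_lim_const 1 t) as D0.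
  apply is_derive_Reals in D'.
  pose proof (uniqueness_limite _ _ _ _ D' D0) as U. nra.
Qed.

Lemma comp_T (f df T : R -> R) lT (P : R -> Prop) :
  derivable_pt_lim T 0 lT -> (forall u, P u -> derivable_pt_lim f u (df u)) -> P (T 0) ->
  derivable_pt_lim (fun s => f (T s)) 0 (df (T 0) * lT).
Proof.
  intros HT Hf HP. exact (derivable_pt_lim_comp T f 0 lT (df (T 0)) HT (Hf _ HP)).
Qed.

Lemma tangent_TV lo hi x1 x5 a1 a2 a3 dx1 dx5 da1 da2 da3 q t w :
  (forall t, oint lo hi t -> derivable_pt_lim x1 t (dx1 t)) ->
  (forall t, oint lo hi t -> derivable_pt_lim x5 t (dx5 t)) ->
  (forall t, oint lo hi t -> derivable_pt_lim a1 t (da1 t)) ->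
  (forall t, oint lo hi t -> derivable_pt_lim a2 t (da2 t)) ->
  (forall t, oint lo hi t -> derivable_pt_lim a3 t (da3 t)) ->
  (forall t, oint lo hi t -> 0 < x1 t) ->
  (forall t, oint lo hi t -> x1 t ^ 2 + x5 t ^ 2 = 1) ->
  on_S3 q -> oint lo hi t ->
  tangent_vec (oint lo hi) (Fmap x1 x5 a1 a2 a3) q t w ->
  exists g tau, TVh (x1 t) (x5 t) (dx5 t) (da1 t) (da2 t) (da3 t) q w g tau.
Proof.
  intros D1 D5 Da1 Da2 Da3 Hpos Hc Hq Ht
    [G [T [HGT [HG0 [HT0 [HGd [[lT HTd] [Hfst Hsnd]]]]]]]].
  destruct (HGd 1%nat ltac:(lia)) as [l1 Hl1].
  destruct (HGd 2%nat ltac:(lia)) as [l2 Hl2].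
  destruct (HGd 3%nat ltac:(lia)) as [l3 Hl3].
  destruct (HGd 4%nat ltac:(lia)) as [l4 Hl4].
  pose (g := fun m => match m with 1%nat => l1 | 2%nat => l2 | 3%nat => l3 | 4%nat => l4 | _ => 0 end).
  exists g, lT.
  assert (HT0' : oint lo hi (T 0)) by (rewrite HT0; exact Ht).
  pose proof (circ_deriv lo hi x1 x5 dx1 dx5 t D1 D5 Hc Ht) as Hcd.
  pose proof (Hpos t Ht) as H1.
  assert (Hdx1 : dx1 t = - (x5 t * dx5 t) / x1 t) by (field_simplify_eq; [lra | lra]).
  split; [|split; [|split; [|split]]].
  -
    pose proof (derivable_pt_lim_plus _ _ 0 _ _
      (derivable_pt_lim_plus _ _ 0 _ _
       (derivable_pt_lim_plus _ _ 0 _ _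
         (derivable_pt_lim_mult _ _ 0 _ _ Hl1 Hl1) (derivable_pt_lim_mult _ _ 0 _ _ Hl2 Hl2))
         (derivable_pt_lim_mult _ _ 0 _ _ Hl3 Hl3))
         (derivable_pt_lim_mult _ _ 0 _ _ Hl4 Hl4)) as Dq.
    unfold plus_fct, mult_real_fct in Dq.
    assert (Ef : (fun x => G x 1%nat * G x 1%nat + G x 2%nat * G x 2%nat + G x 3%nat * G x 3%nat
                    + G x 4%nat * G x 4%nat) = (fun _ => 1)).
    { apply functional_extensionality; intro s. destruct (HGT s) as [Hs _].
      unfold on_S3 in Hs. rewrite <- Hs. ring. }
    assert (Dq2 : forall l, derivable_pt_lim (fun x => G x 1%nat * G x 1%nat + G x 2%nat * G x 2%nat
       + G x 3%nat * G x 3%nat + G x 4%nat * G x 4%nat) 0 l -> derivable_pt_lim (fun _ => 1) 0 l)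
      by (intros l Hl; rewrite <- Ef; exact Hl).
    pose proof (uniqueness_limite _ _ _ _ (Dq2 _ Dq) (derivable_pt_lim_const 1 0)) as U.
    rewrite !HG0 in U by lia. unfold qg, g. lra.
  -
    intros m Hm.
    pose proof (Hfst m Hm) as Dm.
    assert (Ef : (fun s => fst (Fmap x1 x5 a1 a2 a3 (G s) (T s)) m)
                 = (fun s => yv (x1 (T s)) (x5 (T s)) (G s) m)).
    { apply functional_extensionality; intro s. rewrite Fmap_fst. reflexivity. }
    rewrite Ef in Dm.
    pose proof (comp_T x1 dx1 T lT _ HTd D1 HT0') as C1.
    pose proof (comp_T x5 dx5 T lT _ HTd D5 HT0') as C5.
    rewrite HT0 in C1, C5.
    destruct m as [|[|[|[|[|[|m]]]]]]; try lia; unfold yv in Dm; unfold xiv.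
    + pose proof (uniqueness_limite _ _ _ _ Dm (derivable_pt_lim_mult _ _ 0 _ _ C1 Hl1)) as U.
      cbv beta in U. rewrite ?HT0, (HG0 1%nat ltac:(lia)) in U. rewrite U, Hdx1. unfold g. field. lra.
    + pose proof (uniqueness_limite _ _ _ _ Dm (derivable_pt_lim_mult _ _ 0 _ _ C1 Hl2)) as U.
      cbv beta in U. rewrite ?HT0, (HG0 2%nat ltac:(lia)) in U. rewrite U, Hdx1. unfold g. field. lra.
    + pose proof (uniqueness_limite _ _ _ _ Dm (derivable_pt_lim_mult _ _ 0 _ _ C1 Hl3)) as U.
      cbv beta in U. rewrite ?HT0, (HG0 3%nat ltac:(lia)) in U. rewrite U, Hdx1. unfold g. field. lra.
    + pose proof (uniqueness_limite _ _ _ _ Dm (derivable_pt_lim_mult _ _ 0 _ _ C1 Hl4)) as U.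
      cbv beta in U. rewrite ?HT0, (HG0 4%nat ltac:(lia)) in U. rewrite U, Hdx1. unfold g. field. lra.
    + pose proof (uniqueness_limite _ _ _ _ Dm C5) as U. rewrite U. ring.
  - pose proof (Hsnd 1%nat ltac:(lia)) as Dm.
    assert (Ef : (fun s => snd (Fmap x1 x5 a1 a2 a3 (G s) (T s)) 1%nat) = (fun s => a1 (T s))).
    { apply functional_extensionality; intro s. destruct (HGT s) as [Hs Hts].
      rewrite Fmap_snd by (auto; lia). reflexivity. }
    rewrite Ef in Dm.
    pose proof (comp_T a1 da1 T lT _ HTd Da1 HT0') as C. rewrite HT0 in C.
    exact (uniqueness_limite _ _ _ _ Dm C).
  - pose proof (Hsnd 2%nat ltac:(lia)) as Dm.
    assert (Ef : (fun s => snd (Fmap x1 x5 a1 a2 a3 (G s) (T s)) 2%nat) = (fun s => a2 (T s))).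
    { apply functional_extensionality; intro s. destruct (HGT s) as [Hs Hts].
      rewrite Fmap_snd by (auto; lia). reflexivity. }
    rewrite Ef in Dm.
    pose proof (comp_T a2 da2 T lT _ HTd Da2 HT0') as C. rewrite HT0 in C.
    exact (uniqueness_limite _ _ _ _ Dm C).
  - pose proof (Hsnd 3%nat ltac:(lia)) as Dm.
    assert (Ef : (fun s => snd (Fmap x1 x5 a1 a2 a3 (G s) (T s)) 3%nat) = (fun s => a3 (T s))).
    { apply functional_extensionality; intro s. destruct (HGT s) as [Hs Hts].
      rewrite Fmap_snd by (auto; lia). reflexivity. }
    rewrite Ef in Dm.
    pose proof (comp_T a3 da3 T lT _ HTd Da3 HT0') as C. rewrite HT0 in C.
    exact (uniqueness_limite _ _ _ _ Dm C).
Qed.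

Lemma L_deriv lam (x5 a1 a2 a3 : R -> R) t d5 e1 e2 e3 :
  0 < lam -> 0 < 1 + x5 t ->
  derivable_pt_lim x5 t d5 -> derivable_pt_lim a1 t e1 ->
  derivable_pt_lim a2 t e2 -> derivable_pt_lim a3 t e3 ->
  derivable_pt_lim (fun u => ln (lam + (a1 u ^ 2 + a2 u ^ 2 + a3 u ^ 2)) + 8 * ln (1 + x5 u)) t
    (2 * (a1 t * e1 + a2 t * e2 + a3 t * e3) / (lam + (a1 t ^ 2 + a2 t ^ 2 + a3 t ^ 2))
     + 8 * d5 / (1 + x5 t)).
Proof.
  intros Hl H5 D5 D1 D2 D3.
  apply is_derive_Reals in D5, D1, D2, D3.
  apply is_derive_Reals.
  auto_derive.
  - repeat split; try (eexists; eassumption). nra. lra.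
  - replace (Derive (fun x => x5 x) t) with d5 by (symmetry; apply is_derive_unique; exact D5).
    replace (Derive (fun x => a1 x) t) with e1 by (symmetry; apply is_derive_unique; exact D1).
    replace (Derive (fun x => a2 x) t) with e2 by (symmetry; apply is_derive_unique; exact D2).
    replace (Derive (fun x => a3 x) t) with e3 by (symmetry; apply is_derive_unique; exact D3).
    field. split; nra.
Qed.

Lemma Kc_ODE lam A1 A2 A3 d1 d2 d3 X1 X5 X5d ai di :
  0 < lam -> 0 < X1 -> X1 ^ 2 + X5 ^ 2 = 1 ->
  Kc lam A1 A2 A3 d1 d2 d3 X1 X5 (X5d / X1) ai di =
  (1 + X5) ^ 2 * (lam + (A1 ^ 2 + A2 ^ 2 + A3 ^ 2)) / 2 *
  (4 * di * ((1 - X5) / (1 + X5))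
   - ai * (2 * (A1 * d1 + A2 * d2 + A3 * d3) / (lam + (A1 ^ 2 + A2 ^ 2 + A3 ^ 2)) + 8 * X5d / (1 + X5))).
Proof.
  intros Hl H1 H2. unfold Kc.
  assert (H5 : 0 < 1 + X5) by nra.
  assert (Hr : 0 < lam + (A1 ^ 2 + A2 ^ 2 + A3 ^ 2)) by nra.
  replace (X1 ^ 2) with (1 - X5 ^ 2) by lra.
  field. lra.
Qed.

Definition ek (k : nat) : vec := fun m => if Nat.eqb m (S k) then 1 else 0.
Definition Gk (k : nat) (s : R) : vec := fun m =>
  match m with 1%nat => cos s | _ => if Nat.eqb m (S k) then sin s else 0 end.
Definition Ew (k : nat) (X1 : R) : pt := (fun m => if Nat.eqb m (S k) then X1 else 0, fun _ => 0).

Ltac dtac := apply is_derive_Reals; auto_derive; repeat split;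
  try (rewrite ?sin_0, ?cos_0; ring).

Lemma Ek_tangent x1 x5 a1 a2 a3 lo hi t k :
  (1 <= k <= 3)%nat -> 0 < x1 t -> x1 t ^ 2 + x5 t ^ 2 = 1 -> oint lo hi t ->
  tangent_vec (oint lo hi) (Fmap x1 x5 a1 a2 a3) ev t (Ew k (x1 t)).
Proof.
  intros Hk H1 H2 Ht.
  assert (HS : forall s, on_S3 (Gk k s)).
  { intro s. pose proof (sin2_cos2 s) as E. unfold Rsqr in E.
    unfold on_S3, Gk. destruct k as [|[|[|[|k]]]]; try lia; simpl; nra. }
  exists (Gk k), (fun _ => t).
  split; [intro s; split; [apply HS | exact Ht]|].
  split; [intros m Hm; unfold Gk, ev; destruct k as [|[|[|[|k]]]]; try lia;
          destruct m as [|[|[|[|[|m]]]]]; try lia; simpl; rewrite ?sin_0, ?cos_0; reflexivity|].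
  split; [reflexivity|].
  split; [intros m Hm; unfold Gk; destruct k as [|[|[|[|k]]]]; try lia;
          destruct m as [|[|[|[|[|m]]]]]; try lia; simpl; eexists;
          first [apply derivable_pt_lim_cos | apply derivable_pt_lim_sin | apply derivable_pt_lim_const]|].
  split; [exists 0; apply derivable_pt_lim_const|].
  split.
  - intros m Hm.
    assert (Ef : (fun s => fst (Fmap x1 x5 a1 a2 a3 (Gk k s) t) m)
                 = (fun s => yv (x1 t) (x5 t) (Gk k s) m)).
    { apply functional_extensionality; intro s. rewrite Fmap_fst. reflexivity. }
    rewrite Ef. unfold yv, Gk, Ew. destruct k as [|[|[|[|k]]]]; try lia;
    destruct m as [|[|[|[|[|[|m]]]]]]; try lia; simpl; dtac.
  - intros m Hm.
    assert (Ef : (fun s => snd (Fmap x1 x5 a1 a2 a3 (Gk k s) t) m)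
                 = (fun s => snd (cpath x1 x5 a1 a2 a3 t) m)).
    { apply functional_extensionality; intro s. rewrite Fmap_snd; auto. }
    rewrite Ef. apply derivable_pt_lim_const.
Qed.

Definition Tw (dX1 dX5 e1 e2 e3 tau : R) : pt :=
  (fun m => match m with 1%nat => dX1 * tau | 5%nat => dX5 * tau | _ => 0 end,
   fun i => match i with 1%nat => e1 * tau | 2%nat => e2 * tau | 3%nat => e3 * tau | _ => 0 end).

Lemma dpl_eq f x l l' : derivable_pt_lim f x l -> l = l' -> derivable_pt_lim f x l'.
Proof. intros H ->. exact H. Qed.

Lemma T_tangent lo hi x1 x5 a1 a2 a3 dx1 dx5 da1 da2 da3 t :
  (forall t, oint lo hi t -> derivable_pt_lim x1 t (dx1 t)) ->
  (forall t, oint lo hi t -> derivable_pt_lim x5 t (dx5 t)) ->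
  (forall t, oint lo hi t -> derivable_pt_lim a1 t (da1 t)) ->
  (forall t, oint lo hi t -> derivable_pt_lim a2 t (da2 t)) ->
  (forall t, oint lo hi t -> derivable_pt_lim a3 t (da3 t)) ->
  (forall t, oint lo hi t -> 0 < x1 t) ->
  (forall t, oint lo hi t -> x1 t ^ 2 + x5 t ^ 2 = 1) ->
  oint lo hi t ->
  exists tau, 0 < tau /\
  tangent_vec (oint lo hi) (Fmap x1 x5 a1 a2 a3) ev t (Tw (dx1 t) (dx5 t) (da1 t) (da2 t) (da3 t) tau).
Proof.
  intros D1 D5 Da1 Da2 Da3 Hpos Hc Ht.
  destruct (oint_nbhd lo hi t Ht) as [d [Hd Hu]].
  exists (d / 2). split; [lra|].
  set (tau := d / 2).
  set (T := fun s => t + tau * sin s).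
  assert (HI : forall s, oint lo hi (T s)).
  { intro s. apply Hu. unfold T. replace (t + tau * sin s - t) with (tau * sin s) by ring.
    rewrite Rabs_mult. rewrite (Rabs_right tau) by (unfold tau; lra).
    pose proof (SIN_bound s). assert (Rabs (sin s) <= 1) by (apply Rabs_le; lra).
    unfold tau. nra. }
  assert (HT0 : T 0 = t) by (unfold T; rewrite sin_0; ring).
  assert (HTd : derivable_pt_lim T 0 tau).
  { unfold T. dtac. }
  assert (HT0' : oint lo hi (T 0)) by (rewrite HT0; exact Ht).
  exists (fun _ => ev), T.
  split; [intro s; split; [apply ev_S3 | apply HI]|].
  split; [intros; reflexivity|].
  split; [exact HT0|].
  split; [intros; exists 0; apply derivable_pt_lim_const|].
  split; [exists tau; exact HTd|].
  split.
  - intros m Hm.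
    assert (Ef : (fun s => fst (Fmap x1 x5 a1 a2 a3 ev (T s)) m)
                 = (fun s => yv (x1 (T s)) (x5 (T s)) ev m)).
    { apply functional_extensionality; intro s. rewrite Fmap_fst. reflexivity. }
    rewrite Ef.
    pose proof (comp_T x1 dx1 T tau _ HTd D1 HT0') as C1.
    pose proof (comp_T x5 dx5 T tau _ HTd D5 HT0') as C5.
    rewrite HT0 in C1, C5.
    destruct m as [|[|[|[|[|[|m]]]]]]; try lia; unfold yv, ev, Tw; simpl.
    + apply (dpl_eq _ _ _ _ (derivable_pt_lim_mult _ _ 0 _ _ C1 (derivable_pt_lim_const 1 0))). unfold fct_cte; ring.
    + apply (dpl_eq _ _ _ _ (derivable_pt_lim_mult _ _ 0 _ _ C1 (derivable_pt_lim_const 0 0))). unfold fct_cte; ring.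
    + apply (dpl_eq _ _ _ _ (derivable_pt_lim_mult _ _ 0 _ _ C1 (derivable_pt_lim_const 0 0))). unfold fct_cte; ring.
    + apply (dpl_eq _ _ _ _ (derivable_pt_lim_mult _ _ 0 _ _ C1 (derivable_pt_lim_const 0 0))). unfold fct_cte; ring.
    + exact C5.
  - intros m Hm.
    assert (Ef : (fun s => snd (Fmap x1 x5 a1 a2 a3 ev (T s)) m)
                 = (fun s => snd (cpath x1 x5 a1 a2 a3 (T s)) m)).
    { apply functional_extensionality; intro s. rewrite Fmap_snd; auto. apply ev_S3. }
    rewrite Ef.
    destruct m as [|[|[|[|m]]]]; try lia; unfold cpath, Tw; simpl.
    + pose proof (comp_T a1 da1 T tau _ HTd Da1 HT0') as C. rewrite HT0 in C. exact C.
    + pose proof (comp_T a2 da2 T tau _ HTd Da2 HT0') as C. rewrite HT0 in C. exact C.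
    + pose proof (comp_T a3 da3 T tau _ HTd Da3 HT0') as C. rewrite HT0 in C. exact C.
Qed.

Lemma Ew_TVh k X1 X5 X5d d1 d2 d3 : (1 <= k <= 3)%nat -> 0 < X1 ->
  TVh X1 X5 X5d d1 d2 d3 ev (Ew k X1) (ek k) 0.
Proof.
  intros Hk H1. unfold TVh, Ew, agree, xiv, qg, ek, ev; simpl.
  destruct k as [|[|[|[|k]]]]; try lia; simpl;
  (split; [ring|split; [|split; [ring|split; ring]]]);
  intros m Hm; destruct m as [|[|[|[|[|[|m]]]]]]; try lia; simpl; field; lra.
Qed.

Lemma Tw_TVh X1 X5 dX1 X5d d1 d2 d3 tau : 0 < X1 -> X1 * dX1 + X5 * X5d = 0 ->
  TVh X1 X5 X5d d1 d2 d3 ev (Tw dX1 X5d d1 d2 d3 tau) (fun _ => 0) tau.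
Proof.
  intros H1 Hd. unfold TVh, Tw, agree, xiv, qg, ev; simpl.
  split; [ring|split; [|split; [ring|split; ring]]].
  assert (E : dX1 = - (X5 * X5d) / X1) by (field_simplify_eq; lra).
  intros m Hm; destruct m as [|[|[|[|[|[|m]]]]]]; try lia; simpl; rewrite ?E; field; lra.
Qed.

Lemma phi_EET lam X1 X5 X5d d1 d2 d3 Aa dX1 tau j k :
  0 < lam -> 0 < X1 -> X1 ^ 2 + X5 ^ 2 = 1 -> X1 * dX1 + X5 * X5d = 0 ->
  (j = 1%nat /\ k = 2%nat \/ j = 1%nat /\ k = 3%nat \/ j = 2%nat /\ k = 3%nat) ->
  phi lam (yv X1 X5 ev, Aa) (Ew j X1) (Ew k X1) (Tw dX1 X5d d1 d2 d3 tau) =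
  / (s_lam lam (yv X1 X5 ev, Aa)) ^ 3 * tau *
  (if Nat.eqb k 2 then Kc lam (Aa 1%nat) (Aa 2%nat) (Aa 3%nat) d1 d2 d3 X1 X5 (X5d / X1) (Aa 1%nat) d1
   else if Nat.eqb j 1 then Kc lam (Aa 1%nat) (Aa 2%nat) (Aa 3%nat) d1 d2 d3 X1 X5 (X5d / X1) (Aa 2%nat) d2
   else - Kc lam (Aa 1%nat) (Aa 2%nat) (Aa 3%nat) d1 d2 d3 X1 X5 (X5d / X1) (Aa 3%nat) d3).
Proof.
  intros Hl H1 H2 Hd Hjk.
  assert (Hj : (1 <= j <= 3)%nat) by lia. assert (Hk : (1 <= k <= 3)%nat) by lia.
  rewrite (phi_val lam X1 X5 X5d d1 d2 d3 ev Aa _ _ _ _ _ _ _ _ _ Hl H1 H2 ev_S3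
     (Ew_TVh j X1 X5 X5d d1 d2 d3 Hj H1) (Ew_TVh k X1 X5 X5d d1 d2 d3 Hk H1)
     (Tw_TVh X1 X5 dX1 X5d d1 d2 d3 tau H1 Hd)).
  destruct Hjk as [[-> ->]|[[-> ->]|[-> ->]]]; unfold det3, cc, Nv, ev, ek; simpl; ring.
Qed.

Theorem mainTheorem4 (lam : R) (hlam : 0 < lam) (lo hi : option R)
  (x1 x5 a1 a2 a3 : R -> R)
  (hsm : smooth_on (oint lo hi) x1 /\ smooth_on (oint lo hi) x5 /\
         smooth_on (oint lo hi) a1 /\ smooth_on (oint lo hi) a2 /\
         smooth_on (oint lo hi) a3)
  (hpos : forall t, oint lo hi t -> 0 < x1 t)
  (hcirc : forall t, oint lo hi t -> x1 t ^ 2 + x5 t ^ 2 = 1) :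
  (forall (q : vec) (t : R), on_S3 q -> oint lo hi t ->
     forall w1 w2 w3 : pt,
       tangent_vec (oint lo hi) (Fmap x1 x5 a1 a2 a3) q t w1 ->
       tangent_vec (oint lo hi) (Fmap x1 x5 a1 a2 a3) q t w2 ->
       tangent_vec (oint lo hi) (Fmap x1 x5 a1 a2 a3) q t w3 ->
       phi lam (Fmap x1 x5 a1 a2 a3 q t) w1 w2 w3 = 0)
  <->
  (forall t, oint lo hi t ->
     forall a : R -> R, (a = a1 \/ a = a2 \/ a = a3) ->
       4 * deriv a t * ((1 - x5 t) / (1 + x5 t))
       - a t * deriv (fun u => ln (lam + (a1 u ^ 2 + a2 u ^ 2 + a3 u ^ 2))
                               + 8 * ln (1 + x5 u)) t = 0).
Proof.
  destruct hsm as [[Dx1 [Ex1 HDx1]] [[Dx5 [Ex5 HDx5]] [[Db1 [Eb1 HDb1]] [[Db2 [Eb2 HDb2]] [Db3 [Eb3 HDb3]]]]]].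
  assert (D1 : forall t, oint lo hi t -> derivable_pt_lim x1 t (Dx1 1%nat t))
    by (intros t Ht; rewrite <- Ex1; apply HDx1; exact Ht).
  assert (D5 : forall t, oint lo hi t -> derivable_pt_lim x5 t (Dx5 1%nat t))
    by (intros t Ht; rewrite <- Ex5; apply HDx5; exact Ht).
  assert (Da1 : forall t, oint lo hi t -> derivable_pt_lim a1 t (Db1 1%nat t))
    by (intros t Ht; rewrite <- Eb1; apply HDb1; exact Ht).
  assert (Da2 : forall t, oint lo hi t -> derivable_pt_lim a2 t (Db2 1%nat t))
    by (intros t Ht; rewrite <- Eb2; apply HDb2; exact Ht).
  assert (Da3 : forall t, oint lo hi t -> derivable_pt_lim a3 t (Db3 1%nat t))
    by (intros t Ht; rewrite <- Eb3; apply HDb3; exact Ht).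
  assert (ODE : forall t, oint lo hi t ->
     forall i, (1 <= i <= 3)%nat ->
     (4 * deriv (match i with 1%nat => a1 | 2%nat => a2 | _ => a3 end) t * ((1 - x5 t) / (1 + x5 t))
       - (match i with 1%nat => a1 | 2%nat => a2 | _ => a3 end) t *
         deriv (fun u => ln (lam + (a1 u ^ 2 + a2 u ^ 2 + a3 u ^ 2)) + 8 * ln (1 + x5 u)) t)
     * ((1 + x5 t) ^ 2 * (lam + (a1 t ^ 2 + a2 t ^ 2 + a3 t ^ 2)) / 2)
     = Kc lam (a1 t) (a2 t) (a3 t) (Db1 1%nat t) (Db2 1%nat t) (Db3 1%nat t) (x1 t) (x5 t)
          (Dx5 1%nat t / x1 t)
          (match i with 1%nat => a1 t | 2%nat => a2 t | _ => a3 t end)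
          (match i with 1%nat => Db1 1%nat t | 2%nat => Db2 1%nat t | _ => Db3 1%nat t end)).
  { intros t Ht i Hi.
    pose proof (hpos t Ht) as H1. pose proof (hcirc t Ht) as H2.
    assert (H5 : 0 < 1 + x5 t) by nra.
    rewrite (deriv_eq _ _ _ (L_deriv lam x5 a1 a2 a3 t _ _ _ _ hlam H5 (D5 t Ht) (Da1 t Ht) (Da2 t Ht) (Da3 t Ht))).
    rewrite (Kc_ODE _ _ _ _ _ _ _ _ _ _ _ _ hlam H1 H2).
    destruct i as [|[|[|[|i]]]]; try lia;
    [rewrite (deriv_eq _ _ _ (Da1 t Ht)) | rewrite (deriv_eq _ _ _ (Da2 t Ht)) | rewrite (deriv_eq _ _ _ (Da3 t Ht))];
    ring. }
  assert (Fpair : forall q t, on_S3 q -> oint lo hi t ->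
     Fmap x1 x5 a1 a2 a3 q t = (yv (x1 t) (x5 t) q, snd (Fmap x1 x5 a1 a2 a3 q t)) /\
     snd (Fmap x1 x5 a1 a2 a3 q t) 1%nat = a1 t /\
     snd (Fmap x1 x5 a1 a2 a3 q t) 2%nat = a2 t /\
     snd (Fmap x1 x5 a1 a2 a3 q t) 3%nat = a3 t).
  { intros q t Hq Ht. split; [|split; [|split]].
    - rewrite (surjective_pairing (Fmap x1 x5 a1 a2 a3 q t)) at 1. rewrite Fmap_fst. reflexivity.
    - rewrite Fmap_snd by (auto; lia). reflexivity.
    - rewrite Fmap_snd by (auto; lia). reflexivity.
    - rewrite Fmap_snd by (auto; lia). reflexivity. }
  split.
  -
    intros Hphi t Ht.
    pose proof (hpos t Ht) as H1. pose proof (hcirc t Ht) as H2.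
    assert (H5 : 0 < 1 + x5 t) by nra.
    assert (Hr : 0 < lam + (a1 t ^ 2 + a2 t ^ 2 + a3 t ^ 2)) by nra.
    pose proof (circ_deriv lo hi x1 x5 _ _ t D1 D5 hcirc Ht) as Hcd.
    destruct (T_tangent lo hi x1 x5 a1 a2 a3 _ _ _ _ _ t D1 D5 Da1 Da2 Da3 hpos hcirc Ht) as [tau [Htau HT]].
    destruct (Fpair ev t ev_S3 Ht) as [FP [A1 [A2 A3]]].
    assert (KZ : forall j k, (j = 1%nat /\ k = 2%nat \/ j = 1%nat /\ k = 3%nat \/ j = 2%nat /\ k = 3%nat) ->
      (if Nat.eqb k 2 then Kc lam (a1 t) (a2 t) (a3 t) (Db1 1%nat t) (Db2 1%nat t) (Db3 1%nat t) (x1 t) (x5 t) (Dx5 1%nat t / x1 t) (a1 t) (Db1 1%nat t)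
       else if Nat.eqb j 1 then Kc lam (a1 t) (a2 t) (a3 t) (Db1 1%nat t) (Db2 1%nat t) (Db3 1%nat t) (x1 t) (x5 t) (Dx5 1%nat t / x1 t) (a2 t) (Db2 1%nat t)
       else - Kc lam (a1 t) (a2 t) (a3 t) (Db1 1%nat t) (Db2 1%nat t) (Db3 1%nat t) (x1 t) (x5 t) (Dx5 1%nat t / x1 t) (a3 t) (Db3 1%nat t)) = 0).
    { intros j k Hjk.
      assert (Hj : (1 <= j <= 3)%nat) by lia. assert (Hk : (1 <= k <= 3)%nat) by lia.
      pose proof (Hphi ev t ev_S3 Ht _ _ _ (Ek_tangent x1 x5 a1 a2 a3 lo hi t j Hj H1 H2 Ht)
                    (Ek_tangent x1 x5 a1 a2 a3 lo hi t k Hk H1 H2 Ht) HT) as P.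
      rewrite FP in P.
      rewrite (phi_EET lam _ _ _ _ _ _ _ _ _ j k hlam H1 H2 Hcd Hjk) in P.
      rewrite A1, A2, A3 in P.
      assert (E : s_lam lam (yv (x1 t) (x5 t) ev, snd (Fmap x1 x5 a1 a2 a3 ev t))
                 = s_lam lam ((fun _ => 0), snd (Fmap x1 x5 a1 a2 a3 ev t))) by reflexivity.
      destruct (s4 lam _ hlam _ E) as [Hs _].
      set (s := s_lam lam (yv (x1 t) (x5 t) ev, snd (Fmap x1 x5 a1 a2 a3 ev t))) in *.
      set (K := if Nat.eqb k 2 then _ else _) in *.
      assert (Hs3 : 0 < / s ^ 3) by (apply Rinv_0_lt_compat; apply pow_lt; exact Hs).
      destruct (Rmult_integral _ _ P) as [P1|P1].
      - destruct (Rmult_integral _ _ P1); lra.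
      - exact P1. }
    intros a Ha.
    assert (G : forall i, (1 <= i <= 3)%nat ->
      4 * deriv (match i with 1%nat => a1 | 2%nat => a2 | _ => a3 end) t * ((1 - x5 t) / (1 + x5 t))
       - (match i with 1%nat => a1 | 2%nat => a2 | _ => a3 end) t *
         deriv (fun u => ln (lam + (a1 u ^ 2 + a2 u ^ 2 + a3 u ^ 2)) + 8 * ln (1 + x5 u)) t = 0).
    { intros i Hi. pose proof (ODE t Ht i Hi) as O.
      assert (KZi : Kc lam (a1 t) (a2 t) (a3 t) (Db1 1%nat t) (Db2 1%nat t) (Db3 1%nat t) (x1 t) (x5 t)
          (Dx5 1%nat t / x1 t)
          (match i with 1%nat => a1 t | 2%nat => a2 t | _ => a3 t end)
          (match i with 1%nat => Db1 1%nat t | 2%nat => Db2 1%nat t | _ => Db3 1%nat t end) = 0).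
      { destruct i as [|[|[|[|i]]]]; try lia.
        - exact (KZ 1%nat 2%nat ltac:(lia)).
        - exact (KZ 1%nat 3%nat ltac:(lia)).
        - pose proof (KZ 2%nat 3%nat ltac:(lia)) as Z. simpl in Z. lra. }
      rewrite KZi in O.
      assert (Hf : 0 < (1 + x5 t) ^ 2 * (lam + (a1 t ^ 2 + a2 t ^ 2 + a3 t ^ 2)) / 2) by
        (apply Rmult_lt_0_compat; [apply Rmult_lt_0_compat; [apply pow_lt; lra | lra] | lra]).
      destruct (Rmult_integral _ _ O) as [O1|O1]; [exact O1 | lra]. }
    destruct Ha as [ -> | [ -> | -> ] ]; [exact (G 1%nat ltac:(lia)) | exact (G 2%nat ltac:(lia)) | exact (G 3%nat ltac:(lia))].
  -
    intros Hode q t Hq Ht w1 w2 w3 T1 T2 T3.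
    pose proof (hpos t Ht) as H1. pose proof (hcirc t Ht) as H2.
    destruct (tangent_TV lo hi x1 x5 a1 a2 a3 _ _ _ _ _ q t w1 D1 D5 Da1 Da2 Da3 hpos hcirc Hq Ht T1) as [g1 [t1 V1]].
    destruct (tangent_TV lo hi x1 x5 a1 a2 a3 _ _ _ _ _ q t w2 D1 D5 Da1 Da2 Da3 hpos hcirc Hq Ht T2) as [g2 [t2 V2]].
    destruct (tangent_TV lo hi x1 x5 a1 a2 a3 _ _ _ _ _ q t w3 D1 D5 Da1 Da2 Da3 hpos hcirc Hq Ht T3) as [g3 [t3 V3]].
    destruct (Fpair q t Hq Ht) as [FP [A1 [A2 A3]]].
    rewrite FP.
    rewrite (phi_val lam _ _ _ _ _ _ q _ w1 g1 t1 w2 g2 t2 w3 g3 t3 hlam H1 H2 Hq V1 V2 V3).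
    rewrite A1, A2, A3.
    assert (KZ : forall i, (1 <= i <= 3)%nat ->
       Kc lam (a1 t) (a2 t) (a3 t) (Db1 1%nat t) (Db2 1%nat t) (Db3 1%nat t) (x1 t) (x5 t)
          (Dx5 1%nat t / x1 t)
          (match i with 1%nat => a1 t | 2%nat => a2 t | _ => a3 t end)
          (match i with 1%nat => Db1 1%nat t | 2%nat => Db2 1%nat t | _ => Db3 1%nat t end) = 0).
    { intros i Hi. rewrite <- (ODE t Ht i Hi).
      rewrite (Hode t Ht (match i with 1%nat => a1 | 2%nat => a2 | _ => a3 end)).
      ring. destruct i as [|[|[|[|i]]]]; try lia; auto. }
    pose proof (KZ 1%nat ltac:(lia)) as K1. pose proof (KZ 2%nat ltac:(lia)) as K2.
    pose proof (KZ 3%nat ltac:(lia)) as K3. simpl in K1, K2, K3.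
    rewrite K1, K2, K3. ring.
Qed.
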